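(* Let $p\ge1$. Assume Assumption A1(p) and Assumption A2 (see context), and let $0<\eta_s\le\eta_{\infty,p}$ for all $s$. Then for every $t\ge1$, \[\mathbb E^{1/p}\big[\|\tilde\theta^{(\mathrm{tr})}_t\|^p\big]\le\exp\Big(-a\sum_{s=1}^t\eta_sH_s\Big)\|\theta_0-\theta_\star\|,\qquad\tilde\theta^{(\mathrm{tr})}_t=\prod_{s=1}^t\Gamma^{\mathrm{avg}}_s(\theta_0-\theta_\star).\]
   Context: Setting: $N$ agents, dimension $d$. For each agent $c$: distribution $\pi_c$ on $(\mathsf Z,\mathcal Z)$, measurable $\mathbf A^c:\mathsf Z\to\mathbb R^{d\times d}$, $\mathbf b^c:\mathsf Z\to\mathbb R^d$, $\bar{\mathbf A}^c=\mathbb E_{\pi_c}[\mathbf A^c(Z)]$, $\bar{\mathbf b}^c=\mathbb E_{\pi_c}[\mathbf b^c(Z)]$; $\theta_\star$ solves $(N^{-1}\sum_c\bar{\mathbf A}^c)\theta_\star=N^{-1}\sum_c\bar{\mathbf b}^c$; $\bar{\mathbf A}^c\theta^c_\star=\bar{\mathbf b}^c$; $\varepsilon^c(z)=(\mathbf A^c(z)-\bar{\mathbf A}^c)\theta^c_\star-(\mathbf b^c(z)-\bar{\mathbf b}^c)$. Assumption A1(p): each $-\bar{\mathbf A}^c$ Hurwitz; there exist $a>0,\eta_{\infty,p}>0$, $\eta_{\infty,p}a\le1/2$, with $\mathbb E^{1/p}_{Z\sim\pi_c}[\|(I-\eta\mathbf A^c(Z))u\|^p]\le(1-\eta a)\|u\|$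 for all $0<\eta<\eta_{\infty,p}$, $u$. Assumption A2: samples $Z^c_{s,h}$ ($1\le h\le H_s$) independent with $Z^c_{s,h}\sim\pi_c$; $\max_c\sup_z\|\varepsilon^c(z)\|<\infty$, $\max_c\sup_z\max(\|\mathbf A^c(z)\|,\|\mathbf A^c(z)-\bar{\mathbf A}^c\|)<\infty$. $H_s\in\mathbb N$; $\Gamma^c_s=(I-\eta_s\mathbf A^c(Z^c_{s,H_s}))\cdots(I-\eta_s\mathbf A^c(Z^c_{s,1}))$, $\Gamma^{\mathrm{avg}}_s=N^{-1}\sum_c\Gamma^c_s$, $\prod_{s=1}^t\Gamma^{\mathrm{avg}}_s=\Gamma^{\mathrm{avg}}_t\cdots\Gamma^{\mathrm{avg}}_1$; $\theta_0\in\mathbb R^d$ fixed. *)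

(* Defs.v *)
From HB Require Import structures.
From mathcomp Require Import all_boot all_order all_algebra.
From mathcomp Require Import all_classical all_reals all_analysis.
From mathcomp Require Import complex.
Set Implicit Arguments. Unset Strict Implicit. Unset Printing Implicit Defensive.
Import Order.TTheory GRing.Theory Num.Theory.
Local Open Scope ring_scope.

Definition enorm (R : realType) (d : nat) (v : 'cV[R]_d) : R :=
  Num.sqrt (\sum_(i < d) v i ord0 ^+ 2).

Definition hurwitz (R : realType) (d : nat) (M : 'M[R]_d) : Prop :=
  forall lam : R[i], root (char_poly (map_mx (fun x : R => (x%:C)%C) M)) lam ->
    complex.Re lam < 0.

(* Ordered left product:  lprod n F = F n *m F (n-1) *m ... *m F 1
   (identity when n = 0). *)
Fixpoint lprod (R : pzRingType) (d : nat) (n : nat) (F : nat -> 'M[R]_d) : 'M[R]_d :=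
  match n with
  | 0 => 1%:M
  | k.+1 => F k.+1 *m lprod k F
  end.

Definition mutually_independent (R : realType) (dO : measure_display)
  (Omega : measurableType dO) (P : probability Omega R)
  (I : eqType) (D : I -> Prop) (dZ : measure_display) (TZ : measurableType dZ)
  (X : I -> Omega -> TZ) : Prop :=
  forall (F : seq I), uniq F -> (forall i, i \in F -> D i) ->
  forall (B : I -> set TZ), (forall i, measurable (B i)) ->
    (P (\big[setI/setT]_(i <- F) (X i @^-1` B i))%classic
    = \prod_(i <- F) P (X i @^-1` B i)%classic)%E.

Definition Gamma_c (R : realType) (d N : nat) (TZ : Type) (Omega : Type)
  (A : 'I_N -> TZ -> 'M[R]_d) (eta : nat -> R) (H : nat -> nat)
  (Z : 'I_N -> nat -> nat -> Omega -> TZ) (c : 'I_N) (s : nat) (w : Omega) : 'M[R]_d :=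
  lprod (H s) (fun h => 1%:M - eta s *: A c (Z c s h w)).

Definition Gamma_avg (R : realType) (d N : nat) (TZ : Type) (Omega : Type)
  (A : 'I_N -> TZ -> 'M[R]_d) (eta : nat -> R) (H : nat -> nat)
  (Z : 'I_N -> nat -> nat -> Omega -> TZ) (s : nat) (w : Omega) : 'M[R]_d :=
  (N%:R)^-1 *: \sum_(c < N) Gamma_c A eta H Z c s w.

Definition Abar (R : realType) (dZ : measure_display) (TZ : measurableType dZ)
  (d : nat) (mu : measure TZ R) (A : TZ -> 'M[R]_d) : 'M[R]_d :=
  \matrix_(i, j) Rintegral mu setT (fun z => A z i j).
Definition bbar (R : realType) (dZ : measure_display) (TZ : measurableType dZ)
  (d : nat) (mu : measure TZ R) (b : TZ -> 'cV[R]_d) : 'cV[R]_d :=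
  \col_i Rintegral mu setT (fun z => b z i ord0).

(* Main.v *)
Require Import Defs.
From HB Require Import structures.
From mathcomp Require Import all_boot all_order all_algebra.
From mathcomp Require Import all_classical all_reals all_analysis.
From mathcomp Require Import complex.
From mathcomp Require Import ring lra.
Import Order.TTheory GRing.Theory Num.Theory.
Local Open Scope ring_scope.

Module Helpers.
Import mathcomp.analysis.measurable_realfun.
Set Implicit Arguments. Unset Strict Implicit. Unset Printing Implicit Defensive.

Local Open Scope ring_scope.

Section mmeas.
Context {R : realType} {dT : measure_display} {T : measurableType dT}.

Definition mmeas m n (M : T -> 'M[R]_(m, n)) :=
  forall i j, measurable_fun setT (fun x => M x i j).

Lemma meas_sum (I : Type) (r : seq I) (F : I -> T -> R) :
  (forall i, measurable_fun setT (F i)) ->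
  measurable_fun setT (fun x => \sum_(i <- r) F i x).
Proof.
move=> mF; elim: r => [|a r IH].
  rewrite (_ : (fun x => _) = cst 0); first exact: measurable_cst.
  by apply/funext => x; rewrite big_nil.
rewrite (_ : (fun x => _) = F a \+ (fun x => \sum_(i <- r) F i x)).
  exact: measurable_funD.
by apply/funext => x; rewrite big_cons.
Qed.

Lemma mmeas_cst m n (M0 : 'M[R]_(m, n)) : mmeas (fun _ => M0).
Proof. by move=> i j; exact: measurable_cst. Qed.

Lemma mmeas_add m n (M1 M2 : T -> 'M[R]_(m, n)) :
  mmeas M1 -> mmeas M2 -> mmeas (fun x => M1 x + M2 x).
Proof.
move=> h1 h2 i j; rewrite (_ : (fun x => _) = (fun x => M1 x i j) \+ (fun x => M2 x i j)).
  exact: measurable_funD.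
by apply/funext => x; rewrite mxE.
Qed.

Lemma mmeas_opp m n (M1 : T -> 'M[R]_(m, n)) :
  mmeas M1 -> mmeas (fun x => - M1 x).
Proof.
move=> h1 i j; rewrite (_ : (fun x => _) = \- (fun x => M1 x i j)).
  exact: measurable_funN.
by apply/funext => x; rewrite mxE.
Qed.

Lemma mmeas_scale m n (k : T -> R) (M1 : T -> 'M[R]_(m, n)) :
  measurable_fun setT k -> mmeas M1 -> mmeas (fun x => k x *: M1 x).
Proof.
move=> hk h1 i j; rewrite (_ : (fun x => _) = k \* (fun x => M1 x i j)).
  exact: measurable_funM.
by apply/funext => x; rewrite mxE.
Qed.

Lemma mmeas_mul m n l (M1 : T -> 'M[R]_(m, n)) (M2 : T -> 'M[R]_(n, l)) :
  mmeas M1 -> mmeas M2 -> mmeas (fun x => M1 x *m M2 x).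
Proof.
move=> h1 h2 i j.
rewrite (_ : (fun x => _) = (fun x => \sum_(k <- index_enum 'I_n) (fun k x => M1 x i k * M2 x k j) k x)).
  by apply: meas_sum => k; exact: measurable_funM.
by apply/funext => x; rewrite mxE.
Qed.

Lemma mmeas_sum m n (I : Type) (r : seq I) (F : I -> T -> 'M[R]_(m, n)) :
  (forall i, mmeas (F i)) -> mmeas (fun x => \sum_(i <- r) F i x).
Proof.
move=> hF i j.
rewrite (_ : (fun x => _) = (fun x => \sum_(k <- r) (fun k x => F k x i j) k x)).
  by apply: meas_sum => k; exact: hF.
by apply/funext => x; rewrite summxE.
Qed.

Lemma mmeas_lprod d n (F : nat -> T -> 'M[R]_d) :
  (forall k, (1 <= k <= n)%N -> mmeas (F k)) ->
  mmeas (fun x => lprod n (fun k => F k x)).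
Proof.
elim: n => [|n IH] hF /=; first exact: mmeas_cst.
apply: mmeas_mul; first by apply: hF; rewrite leqnn.
apply: IH => k /andP[k1 kn]; apply: hF; rewrite k1 /=; exact: leqW.
Qed.

Lemma meas_enorm d (V : T -> 'cV[R]_d) :
  mmeas V -> measurable_fun setT (fun x => enorm (V x)).
Proof.
move=> hV.
rewrite (_ : (fun x => _) = (fun y => y `^ 2^-1) \o
   (fun x => \sum_(k <- index_enum 'I_d) (fun k x => V x k ord0 ^+ 2) k x)).
  apply: measurableT_comp; first exact: measurable_powR.
  apply: meas_sum => k; rewrite (_ : (fun x => _) = (fun x => V x k ord0) \* (fun x => V x k ord0)).
    exact: measurable_funM.
  by apply/funext => x; rewrite /= expr2.
apply/funext => x; rewrite /= powR12_sqrt //.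
by apply: sumr_ge0 => k _; exact: sqr_ge0.
Qed.

End mmeas.

Section mmeas_gamma.
Context {R : realType} {dT : measure_display} {T : measurableType dT}.
Context (N d : nat) (dZ : measure_display) (TZ : measurableType dZ)
  (A : 'I_N -> TZ -> 'M[R]_d)
  (hAmeas : forall c i j, measurable_fun setT (fun z => A c z i j))
  (eta : nat -> R) (H : nat -> nat).

Lemma mmeas_Acomp c (X : T -> TZ) : measurable_fun setT X ->
  mmeas (fun w => A c (X w)).
Proof. by move=> mX i j; exact: (measurableT_comp (hAmeas c i j) mX). Qed.

Lemma mmeas_factor c (s : nat) (X : T -> TZ) : measurable_fun setT X ->
  mmeas (fun w => 1%:M - eta s *: A c (X w)).
Proof.
move=> mX; apply: mmeas_add; first exact: mmeas_cst.
apply: mmeas_opp; apply: mmeas_scale; first exact: measurable_cst.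
exact: mmeas_Acomp.
Qed.

Lemma mmeas_Gamma_c (Zf : 'I_N -> nat -> nat -> T -> TZ) c s :
  (forall h, (1 <= h <= H s)%N -> measurable_fun setT (Zf c s h)) ->
  mmeas (fun w => Gamma_c A eta H Zf c s w).
Proof.
move=> hZ; rewrite /Gamma_c.
apply: mmeas_lprod.
move=> k hk; exact: mmeas_factor (hZ k hk).
Qed.

Lemma mmeas_Gamma_avg (Zf : 'I_N -> nat -> nat -> T -> TZ) s :
  (forall c h, (1 <= h <= H s)%N -> measurable_fun setT (Zf c s h)) ->
  mmeas (fun w => Gamma_avg A eta H Zf s w).
Proof.
move=> hZ; rewrite /Gamma_avg; apply: mmeas_scale; first exact: measurable_cst.
apply: mmeas_sum => c.
by apply: mmeas_Gamma_c => h; exact: hZ.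
Qed.

Lemma mmeas_Vt (Zf : 'I_N -> nat -> nat -> T -> TZ) t :
  (forall c s h, (1 <= s <= t)%N -> (1 <= h <= H s)%N -> measurable_fun setT (Zf c s h)) ->
  mmeas (fun w => lprod t (fun s => Gamma_avg A eta H Zf s w)).
Proof.
move=> hZ; apply: mmeas_lprod.
by move=> k hk; apply: mmeas_Gamma_avg => c h hh; exact: hZ.
Qed.

End mmeas_gamma.

Local Open Scope ring_scope.

Section Np.
Context {R : realType} {dT : measure_display} {T : measurableType dT}.
Variable (P : probability T R) (p : R).
Hypothesis hp : 1 <= p.
Implicit Types (f g : T -> R).

Let p0 : 0 < p. Proof. by apply: lt_le_trans hp. Qed.

Definition Np (f : T -> R) : \bar R :=
  ((\int[P]_w ((f w) `^ p)%:E) `^ p^-1)%E.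

Lemma Np_ge0 f : (0 <= Np f)%E.
Proof. exact: poweR_ge0. Qed.

Lemma integral_pow_ge0 f : (0 <= \int[P]_w ((f w) `^ p)%:E)%E.
Proof. by apply: integral_ge0 => w _; rewrite lee_fin powR_ge0. Qed.

Lemma NpE_Lnorm f : (forall w, 0 <= f w) ->
  Np f = ('N[P]_p%:E[EFin \o f])%E.
Proof.
move=> f0; rewrite unlock /Np; congr (_ `^ _)%E; apply: eq_integral => w _.
by rewrite (_ : `|(EFin \o f) w|%E = (`|f w|)%:E) // poweR_EFin ger0_norm.
Qed.

Lemma Np_pow f : ((Np f) `^ p = \int[P]_w ((f w) `^ p)%:E)%E.
Proof.
rewrite /Np -poweRrM mulVf ?gt_eqF // poweRe1 //; exact: integral_pow_ge0.
Qed.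

Lemma meas_pow f : measurable_fun setT f ->
  measurable_fun setT (fun w => ((f w) `^ p)%:E).
Proof.
move=> mf; apply/measurable_EFinP.
exact: (measurableT_comp (measurable_powR p) mf).
Qed.

Lemma Np_le f g : measurable_fun setT f -> measurable_fun setT g ->
  (forall w, 0 <= f w <= g w) -> (Np f <= Np g)%E.
Proof.
move=> mf mg fg; rewrite /Np; apply: gt0_ler_poweR.
- by rewrite invr_ge0 ltW.
- by rewrite in_itv /= integral_pow_ge0 leey.
- by rewrite in_itv /= integral_pow_ge0 leey.
apply: ge0_le_integral => //.
- by move=> w _; rewrite lee_fin powR_ge0.
- exact: meas_pow.
- exact: meas_pow.
move=> w _; rewrite lee_fin; have /andP[f0 fg'] := fg w.
by apply: ge0_ler_powR; rewrite ?nnegrE ?(ltW p0) // (le_trans f0 fg').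
Qed.

Lemma Np_D f g : measurable_fun setT f -> measurable_fun setT g ->
  (forall w, 0 <= f w) -> (forall w, 0 <= g w) ->
  (Np (fun w => (f w + g w)%R) <= Np f + Np g)%E.
Proof.
move=> mf mg f0 g0.
rewrite !NpE_Lnorm //; last by move=> w; rewrite addr_ge0.
exact: minkowski_EFin.
Qed.

Lemma powR_inv_pow k : 0 <= k -> (k `^ p) `^ p^-1 = k.
Proof. by move=> k0; rewrite -powRrM mulfV ?gt_eqF // powRr1. Qed.

Lemma Np_Z k f : 0 <= k -> measurable_fun setT f -> (forall w, 0 <= f w) ->
  Np (fun w => k * f w) = (k%:E * Np f)%E.
Proof.
move=> k0 mf f0; rewrite /Np.
under eq_integral => w _ do rewrite (powRM _ k0 (f0 w)) EFinM.
have h1 : forall w, setT w -> (0 <= ((f w) `^ p)%:E)%E.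
  by move=> w _; rewrite lee_fin powR_ge0.
have h2 := meas_pow mf.
have k0' : 0 <= k `^ p by exact: powR_ge0.
rewrite (ge0_integralZl_EFin P measurableT h1 h2 k0').
rewrite poweRM //; last exact: integral_pow_ge0.
by rewrite poweR_EFin powR_inv_pow.
Qed.

Lemma Np_cst k : 0 <= k -> Np (fun _ => k) = k%:E.
Proof.
move=> k0; rewrite /Np.
rewrite (_ : (fun w => _) = cst (k `^ p)%:E) //.
rewrite integral_cst // [X in (_ * X)%E](_ : _ = 1%E); last exact: probability_setT.
rewrite mule1 poweR_EFin.
by rewrite powR_inv_pow.
Qed.

Lemma Np_sum (I : Type) (r : seq I) (F : I -> T -> R) :
  (forall i, measurable_fun setT (F i)) -> (forall i w, 0 <= F i w) ->
  (Np (fun w => (\sum_(i <- r) F i w)%R) <= \sum_(i <- r) Np (F i))%E.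
Proof.
move=> mF F0; elim: r => [|a r IH].
  rewrite big_nil (_ : (fun w => _) = fun _ => 0).
    by rewrite Np_cst.
  by apply/funext => w; rewrite big_nil.
rewrite big_cons (_ : (fun w => _) = (fun w => F a w + (fun w => \sum_(i <- r) F i w) w)%R).
  apply: le_trans (Np_D _ _ _ _) _ => //.
  - exact: meas_sum.
  - by move=> w; apply: sumr_ge0.
  by rewrite leeD2l.
by apply/funext => w; rewrite big_cons.
Qed.

Lemma Np_bound_int f b : 0 <= b -> (Np f <= b%:E)%E ->
  (\int[P]_w ((f w) `^ p)%:E <= (b `^ p)%:E)%E.
Proof.
move=> b0 h; rewrite -Np_pow -poweR_EFin; apply: gt0_ler_poweR => //.
- exact: ltW.
- by rewrite in_itv /= Np_ge0 leey.
- by rewrite in_itv /= lee_fin b0 leey.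
Qed.

Lemma int_bound_Np f b : 0 <= b ->
  (\int[P]_w ((f w) `^ p)%:E <= (b `^ p)%:E)%E -> (Np f <= b%:E)%E.
Proof.
move=> b0 h; rewrite /Np -(powR_inv_pow b0) -poweR_EFin; apply: gt0_ler_poweR => //.
- by rewrite invr_ge0 ltW.
- by rewrite in_itv /= integral_pow_ge0 leey.
- by rewrite in_itv /= lee_fin powR_ge0 leey.
Qed.

End Np.

Local Open Scope ring_scope.
Section enorm_lemmas.
Variables (R : realType) (d : nat).
Implicit Types (u v : 'cV[R]_d).

Lemma enorm_ge0 u : 0 <= enorm u.
Proof. exact: sqrtr_ge0. Qed.

Lemma enorm_sq u : enorm u ^+ 2 = \sum_(i < d) u i ord0 ^+ 2.
Proof. by rewrite /enorm sqr_sqrtr // sumr_ge0 // => i _; rewrite sqr_ge0. Qed.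

Lemma cauchy_schwarz u v :
  (\sum_(i < d) u i ord0 * v i ord0) ^+ 2 <=
  (\sum_(i < d) u i ord0 ^+ 2) * (\sum_(i < d) v i ord0 ^+ 2).
Proof.
set x := fun i => u i ord0; set y := fun i => v i ord0.
rewrite -subr_ge0.
have E : ((\sum_i x i ^+ 2) * (\sum_i y i ^+ 2) - (\sum_i x i * y i) ^+ 2) *+ 2
   = \sum_i \sum_j (x i * y j - x j * y i) ^+ 2.
  have H1 : \sum_i \sum_j (x i * y j - x j * y i) ^+ 2 =
     \sum_i \sum_j (x i ^+ 2 * y j ^+ 2) + \sum_i \sum_j (x j ^+ 2 * y i ^+ 2)
     - (\sum_i \sum_j (x i * y i * (x j * y j))) *+ 2.
    rewrite -sumrMnl -big_split -sumrB /=; apply: eq_bigr => i _.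
    rewrite -sumrMnl -big_split -sumrB /=; apply: eq_bigr => j _.
    by rewrite sqrrB !exprMn; ring.
  have Q : (\sum_i x i ^+ 2) * (\sum_i y i ^+ 2) = \sum_i \sum_j (x i ^+ 2 * y j ^+ 2).
    by rewrite mulr_suml; apply: eq_bigr => i _; rewrite mulr_sumr.
  have S : (\sum_i x i * y i) ^+ 2 = \sum_i \sum_j (x i * y i * (x j * y j)).
    by rewrite expr2 mulr_suml; apply: eq_bigr => i _; rewrite mulr_sumr.
  have Q' : \sum_i \sum_j (x j ^+ 2 * y i ^+ 2) = \sum_i \sum_j (x i ^+ 2 * y j ^+ 2).
    by rewrite exchange_big.
  by rewrite H1 Q S Q' mulrnBl mulr2n.
have : 0 <= ((\sum_i x i ^+ 2) * (\sum_i y i ^+ 2) - (\sum_i x i * y i) ^+ 2) *+ 2.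
  by rewrite E; apply: sumr_ge0 => i _; apply: sumr_ge0 => j _; exact: sqr_ge0.
by rewrite pmulrn_lge0.
Qed.

Lemma enormD u v : enorm (u + v) <= enorm u + enorm v.
Proof.
rewrite -(@ler_pXn2r _ 2) ?nnegrE ?addr_ge0 ?enorm_ge0 //.
rewrite sqrrD !enorm_sq.
have -> : \sum_(i < d) (u + v) i ord0 ^+ 2 =
  \sum_(i < d) u i ord0 ^+ 2 + (\sum_(i < d) u i ord0 * v i ord0) *+ 2
  + \sum_(i < d) v i ord0 ^+ 2.
  rewrite -sumrMnl -!big_split /=; apply: eq_bigr => i _.
  by rewrite !mxE sqrrD.
rewrite lerD2r lerD2l lerMn2r /=.
apply: le_trans (ler_norm _) _.
rewrite -(@ler_pXn2r _ 2) ?nnegrE ?mulr_ge0 ?enorm_ge0 //.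
by rewrite real_normK ?num_real // exprMn !enorm_sq cauchy_schwarz.
Qed.

Lemma enormZ k u : enorm (k *: u) = `|k| * enorm u.
Proof.
rewrite /enorm.
under eq_bigr do rewrite mxE exprMn.
by rewrite -mulr_sumr sqrtrM ?sqr_ge0 // sqrtr_sqr.
Qed.

Lemma enormN u : enorm (- u) = enorm u.
Proof. by rewrite -scaleN1r enormZ normrN1 mul1r. Qed.

Lemma enormB u v : enorm (u - v) <= enorm u + enorm v.
Proof. by rewrite -(enormN v) enormD. Qed.

Lemma enorm0 : enorm (0 : 'cV[R]_d) = 0.
Proof. by rewrite -(scale0r (0 : 'cV[R]_d)) enormZ normr0 mul0r. Qed.

Lemma enorm_sum (I : Type) (r : seq I) (P : pred I) (F : I -> 'cV[R]_d) :
  enorm (\sum_(i <- r | P i) F i) <= \sum_(i <- r | P i) enorm (F i).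
Proof.
elim/big_rec2: _ => [|i y1 y2 _ IH]; first by rewrite enorm0.
by apply: le_trans (enormD _ _) _; rewrite lerD2l.
Qed.

End enorm_lemmas.

Local Open Scope classical_set_scope.
Local Open Scope ring_scope.

Lemma aux_compl (R : realType) (a b m q : \bar R) : a \is a fin_num -> b \is a fin_num ->
  m \is a fin_num -> q \is a fin_num -> (a + b = m)%E -> a = (m * q)%E -> b = (m * (1 - q))%E.
Proof.
move: a b m q => [a| |] [b| |] [m| |] [q| |] //= _ _ _ _.
move=> /(congr1 fine) /= h1 /(congr1 fine) /= h2.
rewrite -EFinB -EFinM; congr EFin.
by rewrite mulrBr mulr1 -h2 -h1 addrC addrK.
Qed.

Section indep.
Context {R : realType} {dO : measure_display} {Om : measurableType dO}.
Variable (P : probability Om R).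
Context {dZ : measure_display} {TZ : measurableType dZ}.
Variables (mu : probability TZ R) (X : Om -> TZ) (G : set (set Om)).
Hypothesis mX : measurable_fun setT X.
Hypothesis GI : setI_closed G.
Hypothesis GT : G setT.
Hypothesis Gm : forall E, G E -> measurable E.
Hypothesis hind : forall B E, measurable B -> G E ->
  P (X @^-1` B `&` E) = (mu B * P E)%E.

Local Notation OG := (g_sigma_algebraType G).

Lemma sG_meas (E : set Om) : <<s G >> E -> measurable E.
Proof.
move=> hE; apply: (smallest_sub (sigma_algebra_measurable Om)) hE.
by move=> A /Gm.
Qed.

Lemma idOG_meas : measurable_fun setT (id : Om -> OG).
Proof. by move=> _ B mB; rewrite setTI; exact: sG_meas. Qed.

Lemma psi_meas : measurable_fun setT (fun w : Om => (X w, (w : OG))).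
Proof. exact: measurable_fun_pair mX idOG_meas. Qed.

Definition idOG : {mfun Om >-> OG} :=
  HB.pack (id : Om -> OG) (isMeasurableFun.Build _ _ _ _ _ idOG_meas).
Definition psiOG : {mfun Om >-> (TZ * OG)%type} :=
  HB.pack (fun w : Om => (X w, (w : OG))) (isMeasurableFun.Build _ _ _ _ _ psi_meas).

Definition QG := distribution P idOG.

Lemma indep_sigma (A : set TZ) (E : set OG) : measurable A -> <<s G >> E ->
  P (X @^-1` A `&` E) = (mu A * P E)%E.
Proof.
move=> mA hE.
have mXA : measurable (X @^-1` A).
  by rewrite -[X in measurable X]setTI; exact: mX.
apply: (@dynkin_induction _ OG G (fun E => P (X @^-1` A `&` E) = (mu A * P E)%E)) => //.
- by apply: hind.
- by move=> E' GE'; exact: hind.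
- move=> S mS HS.
  have mS' : measurable (S : set Om) by exact: sG_meas.
  have mSC : measurable (~` S : set Om) by exact: measurableC.
  have hab : (P (X @^-1` A `&` S) + P (X @^-1` A `&` ~` S))%E = mu A.
    rewrite -measureU; last 3 first.
    - exact: measurableI.
    - exact: measurableI.
    - by rewrite setIACA setICr !setI0.
    rewrite -setIUr setUCr setIT.
    have h := hind mA GT; rewrite setIT in h.
    apply: eq_trans; first exact: h.
    by rewrite [Y in (_ * Y)%E](_ : _ = 1%E) ?mule1 //; exact: probability_setT.
  rewrite probability_setC //.
  have fa : P (X @^-1` A `&` S) \is a fin_num by apply: fin_num_measure; exact: measurableI.
  have fb : P (X @^-1` A `&` ~` S) \is a fin_num by apply: fin_num_measure; exact: measurableI.
  have fm : mu A \is a fin_num by exact: fin_num_measure.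
  have fq : P S \is a fin_num by exact: fin_num_measure.
  exact: (aux_compl fa fb fm fq hab HS).
- move=> F mF tF HF.
  have mF' n : measurable (F n : set Om) by apply: sG_meas; exact: (mF n).
  rewrite setI_bigcupr.
  rewrite measure_bigcup //; last first.
    by apply: trivIset_setIl.
    by move=> n _; apply: measurableI.
  rewrite measure_bigcup //.
  have fm : mu A \is a fin_num by exact: fin_num_measure.
  rewrite -(fineK fm) -nneseriesZl; last by move=> n _; exact: measure_ge0.
  apply: eq_eseriesr => n _.
  by rewrite fineK //; exact: HF.
Qed.

Lemma indep_int (f : (TZ * OG)%type -> \bar R) : measurable_fun setT f ->
  (forall x, 0 <= f x)%E ->
  (\int[P]_w f (X w, (w : OG)) = \int[P]_w \int[mu]_z f (z, (w : OG)))%E.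
Proof.
move=> mf f0.
have -> : (\int[P]_w f (X w, (w : OG)) = \int[distribution P psiOG]_y f y)%E.
  by rewrite ge0_integral_distribution.
rewrite (eq_measure_integral (mu \x QG)%E); last first.
  move=> B mB _; apply/esym; apply: product_measure_unique => // A E mA mE.
  exact: indep_sigma mA mE.
rewrite fubini_tonelli2 //.
rewrite ge0_integral_distribution //.
- exact: measurable_fun_fubini_tonelli_G.
- by move=> y; apply: integral_ge0 => z _; exact: f0.
Qed.

End indep.

Local Open Scope classical_set_scope.
Local Open Scope ring_scope.

Section stepsec.
Context {R : realType} (N d : nat) {dZ : measure_display} {TZ : measurableType dZ}.
Variables (pi : 'I_N -> probability TZ R) (A : 'I_N -> TZ -> 'M[R]_d).
Hypothesis hAmeas : forall c i j, measurable_fun setT (fun z => A c z i j).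
Variables (p a eta_inf : R).
Hypotheses (hp : 1 <= p) (ha : 0 < a) (heta_inf : 0 < eta_inf)
  (haeta : eta_inf * a <= 1 / 2).
Hypothesis hA1 : forall (c : 'I_N) (eta : R), 0 < eta < eta_inf ->
     forall u : 'cV[R]_d,
     (((\int[pi c]_z ((enorm ((1%:M - eta *: A c z) *m u)) `^ p)%:E) `^ (p^-1))
        <= ((1 - eta * a) * enorm u)%:E)%E.
Variable M : R.
Hypothesis hM : forall c z (u : 'cV[R]_d), enorm (A c z *m u) <= M * enorm u.

Lemma mmeas_Az c (eta : R) (u : 'cV[R]_d) :
  mmeas (fun z => (1%:M - eta *: A c z) *m u).
Proof.
apply: mmeas_mul; last exact: mmeas_cst.
apply: mmeas_add; first exact: mmeas_cst.
apply: mmeas_opp; apply: mmeas_scale; first exact: measurable_cst.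
exact: hAmeas.
Qed.

Lemma A1_ext c (eta : R) : 0 < eta <= eta_inf -> forall u : 'cV[R]_d,
  (Np (pi c) p (fun z => enorm ((1%:M - eta *: A c z) *m u))
     <= ((1 - eta * a) * enorm u)%:E)%E.
Proof.
move=> /andP[e0 ele] u.
case: (ltrP eta eta_inf) => [elt|ege].
  by apply: hA1; rewrite e0 elt.
have -> : eta = eta_inf by apply/eqP; rewrite eq_le ele ege.
set M0 := `|M|.
apply/lee_addgt0Pr => e e0'.
set nu := enorm u.
have nu0 : 0 <= nu by exact: enorm_ge0.
have X0 : 0 <= (a + M0) * nu by rewrite mulr_ge0 // addr_ge0 ?normr_ge0 // ltW.
set K := (a + M0) * nu + 1.
have K0 : 0 < K by rewrite /K; lra.
set del := Num.min (eta_inf / 2) (e / K).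
have del0 : 0 < del by rewrite lt_min divr_gt0 // divr_gt0.
have del1 : del <= eta_inf / 2 by rewrite ge_min lexx.
have del2 : del <= e / K by rewrite ge_min lexx orbT.
set eta1 := eta_inf - del.
have eta1p : 0 < eta1 < eta_inf by apply/andP; split; rewrite /eta1; lra.
have key := hA1 c eta1p u.
have pw : forall z, enorm ((1%:M - eta_inf *: A c z) *m u) <=
    enorm ((1%:M - eta1 *: A c z) *m u) + del * M0 * nu.
  move=> z.
  have -> : (1%:M - eta_inf *: A c z) *m u =
      (1%:M - eta1 *: A c z) *m u - del *: (A c z *m u).
    rewrite !mulmxBl -!scalemxAl -addrA -opprD -scalerDl /eta1 subrK //.
  apply: le_trans (enormB _ _) _; rewrite lerD2l enormZ ger0_norm ?(ltW del0) //.
  rewrite -mulrA; apply: ler_wpM2l; first exact: ltW.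
  apply: le_trans (hM c z u) _; apply: ler_wpM2r => //; exact: ler_norm.
have mf1 : measurable_fun setT (fun z => enorm ((1%:M - eta1 *: A c z) *m u)).
  exact: meas_enorm (mmeas_Az c eta1 u).
have mf0 : measurable_fun setT (fun z => enorm ((1%:M - eta_inf *: A c z) *m u)).
  exact: meas_enorm (mmeas_Az c eta_inf u).
have mg0 : measurable_fun setT (fun z => enorm ((1%:M - eta1 *: A c z) *m u) + del * M0 * nu).
  by apply: measurable_funD => //; exact: measurable_cst.
have fg0 : forall z, 0 <= enorm ((1%:M - eta_inf *: A c z) *m u) <=
    enorm ((1%:M - eta1 *: A c z) *m u) + del * M0 * nu.
  by move=> z; rewrite enorm_ge0 pw.
apply: le_trans (Np_le (pi c) hp mf0 mg0 fg0) _.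
have c0 : 0 <= del * M0 * nu by rewrite !mulr_ge0 ?normr_ge0 // ltW.
have f10 : forall z, 0 <= enorm ((1%:M - eta1 *: A c z) *m u) by move=> z; exact: enorm_ge0.
have c0' : forall z : TZ, 0 <= del * M0 * nu by move=> _; exact: c0.
apply: le_trans (Np_D (pi c) hp mf1 (measurable_cst (del * M0 * nu)) f10 c0') _.
rewrite Np_cst //.
apply: le_trans (leeD key (lexx _)) _.
rewrite -!EFinD lee_fin.
have -> : (1 - eta1 * a) * nu + del * M0 * nu = (1 - eta_inf * a) * nu + del * ((a + M0) * nu).
  by rewrite /eta1; ring.
rewrite lerD2l.
have hK : del * K <= e by rewrite -ler_pdivlMr.
apply: le_trans hK; rewrite ler_wpM2l ?(ltW del0) // /K lerDl //.
Qed.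

Context {dO : measure_display} {Om : measurableType dO}.
Variable (P : probability Om R).

Lemma step_bound c (eta : R) (X : Om -> TZ) (G : set (set Om)) :
  0 < eta <= eta_inf ->
  measurable_fun setT X -> setI_closed G -> G setT ->
  (forall E, G E -> measurable E) ->
  (forall B E, measurable B -> G E -> P (X @^-1` B `&` E) = (pi c B * P E)%E) ->
  forall W : g_sigma_algebraType G -> 'cV[R]_d, mmeas W ->
  (Np P p (fun w : Om => enorm ((1%:M - eta *: A c (X w)) *m W w))
    <= (1 - eta * a)%:E * Np P p (fun w : Om => enorm (W w)))%E.
Proof.
move=> heta mX GI GT Gm hind W hW.
set b := 1 - eta * a.
have b0 : 0 <= b.
  have : eta * a <= eta_inf * a by rewrite ler_pM2r //; case/andP: heta.
  have h12 : (1 / 2 : R) <= 1 by rewrite ler_pdivrMr // mul1r ler1n.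
  move: haeta h12; rewrite /b; lra.
have hWO : mmeas (T := Om) (fun w => W w).
  by move=> i j; exact: (measurableT_comp (hW i j) (idOG_meas Gm)).
pose phi := fun x : (TZ * g_sigma_algebraType G)%type =>
  ((enorm ((1%:M - eta *: A c x.1) *m W x.2)) `^ p)%:E.
have mphi : measurable_fun setT phi.
  apply/measurable_EFinP; apply: measurableT_comp (measurable_powR p) _.
  apply: meas_enorm; apply: mmeas_mul.
    apply: mmeas_add; first exact: mmeas_cst.
    apply: mmeas_opp; apply: mmeas_scale; first exact: measurable_cst.
    by move=> i j; exact: (measurableT_comp (hAmeas c i j) measurable_fst).
  by move=> i j; exact: (measurableT_comp (hW i j) measurable_snd).
have phi0 : forall x, (0 <= phi x)%E by move=> x; rewrite lee_fin powR_ge0.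
have hI : (\int[P]_w ((enorm ((1%:M - eta *: A c (X w)) *m W w)) `^ p)%:E
    <= (b `^ p)%:E * \int[P]_w ((enorm (W w)) `^ p)%:E)%E.
  have -> : (\int[P]_w ((enorm ((1%:M - eta *: A c (X w)) *m W w)) `^ p)%:E
     = \int[P]_w \int[pi c]_z phi (z, w))%E := indep_int mX GI GT Gm hind mphi phi0.
  have mWp : measurable_fun setT (fun w : Om => ((enorm (W w)) `^ p)%:E).
    by apply: meas_pow; exact: meas_enorm hWO.
  rewrite -ge0_integralZl_EFin //; last 2 first.
    - by move=> w _; rewrite lee_fin powR_ge0.
    - exact: powR_ge0.
  apply: ge0_le_integral => //.
  - by move=> w _; apply: integral_ge0 => z _; exact: phi0.
  - exact: (measurableT_comp (@measurable_fun_fubini_tonelli_G _ _ _ _ _ (pi c) phi mphi phi0) (idOG_meas Gm)).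
  - rewrite (_ : (fun x => _) = (fun w : Om => ((b `^ p) * (enorm (W w)) `^ p)%:E)) //.
    apply/measurable_EFinP; apply: measurable_funM; first exact: measurable_cst.
    by apply: measurableT_comp (measurable_powR p) _; exact: meas_enorm hWO.
  move=> w _.
  have h := A1_ext c heta (W w).
  have h2 := Np_bound_int hp (mulr_ge0 b0 (enorm_ge0 (W w))) h.
  by rewrite -EFinM -powRM // ?enorm_ge0.
rewrite /Np; apply: le_trans (gt0_ler_poweR _ _ _ hI) _.
- by rewrite invr_ge0; exact: le_trans ler01 hp.
- by rewrite in_itv /= leey integral_ge0 // => w _; rewrite lee_fin powR_ge0.
- by rewrite in_itv /= leey mule_ge0 // ?lee_fin ?powR_ge0 // integral_ge0 // => w _; rewrite lee_fin powR_ge0.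
rewrite poweRM ?lee_fin ?powR_ge0 //; last by apply: integral_ge0 => w _; rewrite lee_fin powR_ge0.
by rewrite poweR_EFin powR_inv_pow.
Qed.

End stepsec.

Local Open Scope classical_set_scope.
Local Open Scope ring_scope.

Section idx.
Context {R : realType} (N : nat) {dZ : measure_display} {TZ : measurableType dZ}.
Context {dO : measure_display} {Om : measurableType dO}.
Variables (H : nat -> nat) (Z : 'I_N -> nat -> nat -> Om -> TZ).

Definition Yi (i : 'I_N * nat * nat) (w : Om) : TZ := Z i.1.1 i.1.2 i.2 w.

Definition Lpred (s : nat) (c : 'I_N) (h : nat) (i : 'I_N * nat * nat) : bool :=
  ((0 < i.1.2 < s)%N && (0 < i.2 <= H i.1.2)%N) ||
  ((i.1.1 == c) && (i.1.2 == s) && (0 < i.2 <= h)%N).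

Definition biglist (s : nat) : seq ('I_N * nat * nat) :=
  [seq (cs, h') | cs <- [seq (c', s') | c' <- enum 'I_N, s' <- iota 0 s.+1],
                  h' <- iota 0 (H cs.2).+1].

Definition Lidx s c h := undup [seq i <- biglist s | Lpred s c h i].

Lemma mem_Lidx s c h i : (h <= H s)%N -> (i \in Lidx s c h) = Lpred s c h i.
Proof.
move=> hh; rewrite mem_undup mem_filter; case Lp: (Lpred s c h i) => //=.
case: i Lp => [[c' s'] h'] /= Lp.
have [s's h'H] : (s' <= s)%N /\ (h' <= H s')%N.
  move: Lp; rewrite /Lpred /= => /orP[/andP[/andP[_ ss] /andP[_ hH]] | /andP[/andP[_ /eqP ->] /andP[_ hh']]].
  - by split => //; exact: ltnW.
  - by split => //; exact: leq_trans hh' hh.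
rewrite /biglist; apply/allpairsPdep; exists (c', s'), h'; split => //.
- apply/allpairsPdep; exists c', s'; split => //; first by rewrite mem_enum.
  by rewrite mem_iota add0n ltnS.
- by rewrite mem_iota add0n ltnS.
Qed.

Lemma LpredD s c h i : (1 <= s)%N -> (h <= H s)%N -> Lpred s c h i ->
  (1 <= i.1.2)%N /\ (1 <= i.2 <= H i.1.2)%N.
Proof.
move=> s1 hh; rewrite /Lpred => /orP[/andP[/andP[s0 _] hH] | /andP[/andP[_ /eqP ->] /andP[h0 hh']]].
- by [].
- by split => //; rewrite h0 (leq_trans hh' hh).
Qed.

Definition Gset s c h : set (set Om) :=
  [set E | exists B : 'I_N * nat * nat -> set TZ, (forall i, measurable (B i)) /\
     E = [set w | forall i, i \in Lidx s c h -> B i (Yi i w)]].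

Lemma bigcap_mem (l : seq ('I_N * nat * nat)) (B : 'I_N * nat * nat -> set TZ) :
  \big[setI/setT]_(i <- l) (Yi i @^-1` B i) = [set w | forall i, i \in l -> B i (Yi i w)].
Proof.
elim: l => [|a l IH].
  by rewrite big_nil; apply/seteqP; split => w //= _ i; rewrite in_nil.
rewrite big_cons IH; apply/seteqP; split => w /=.
  move=> [Ba Hl] i; rewrite in_cons => /orP[/eqP -> // | il]; exact: Hl.
move=> H0; split; first by apply: H0; exact: mem_head.
by move=> i il; apply: H0; rewrite in_cons il orbT.
Qed.

Lemma meas_Lset (l : seq ('I_N * nat * nat)) (B : 'I_N * nat * nat -> set TZ) :
  (forall i, i \in l -> measurable_fun setT (Yi i)) -> (forall i, measurable (B i)) ->
  measurable [set w | forall i, i \in l -> B i (Yi i w)].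
Proof.
move=> hY mB; rewrite -bigcap_mem.
elim: l hY => [|a l IH] hY; first by rewrite big_nil; exact: measurableT.
rewrite big_cons; apply: measurableI.
  rewrite -[X in measurable X]setTI; apply: (hY a (mem_head _ _)) => //.
by apply: IH => i il; apply: hY; rewrite in_cons il orbT.
Qed.

Lemma Yi_measG s c h i : (h <= H s)%N -> i \in Lidx s c h ->
  measurable_fun (T := g_sigma_algebraType (Gset s c h)) setT (Yi i).
Proof.
move=> hh iL _ B mB; rewrite setTI; apply: sub_sigma_algebra.
exists (fun j => if j == i then B else setT); split.
  by move=> j; case: ifP => _ //; exact: measurableT.
apply/seteqP; split => w /=.
  by move=> Bw j jL; case: ifP => [/eqP -> //| _].
by move=> H0; have := H0 i iL; rewrite eqxx.
Qed.

Lemma Gset_setI s c h : setI_closed (Gset s c h).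
Proof.
move=> E1 E2 [B1 [mB1 ->]] [B2 [mB2 ->]].
exists (fun i => B1 i `&` B2 i); split; first by move=> i; exact: measurableI.
apply/seteqP; split => w /=.
  by move=> [H1 H2] i iL; split; [exact: H1 | exact: H2].
by move=> H0; split => i iL; have [] := H0 i iL.
Qed.

Lemma Gset_T s c h : Gset s c h setT.
Proof.
exists (fun _ => setT); split; first by move=> _; exact: measurableT.
by apply/seteqP; split => w //=.
Qed.

End idx.

Local Open Scope classical_set_scope.
Local Open Scope ring_scope.

Section mainsec.
Context {R : realType} (N d : nat) {dZ : measure_display} {TZ : measurableType dZ}.
Hypothesis hN : (0 < N)%N.
Variables (pi : 'I_N -> probability TZ R) (A : 'I_N -> TZ -> 'M[R]_d).
Hypothesis hAmeas : forall c i j, measurable_fun setT (fun z => A c z i j).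
Variables (p a eta_inf : R).
Hypotheses (hp : 1 <= p) (ha : 0 < a) (heta_inf : 0 < eta_inf)
  (haeta : eta_inf * a <= 1 / 2).
Hypothesis hA1 : forall (c : 'I_N) (eta : R), 0 < eta < eta_inf ->
     forall u : 'cV[R]_d,
     (((\int[pi c]_z ((enorm ((1%:M - eta *: A c z) *m u)) `^ p)%:E) `^ (p^-1))
        <= ((1 - eta * a) * enorm u)%:E)%E.
Variable M : R.
Hypothesis hM : forall c z (u : 'cV[R]_d), enorm (A c z *m u) <= M * enorm u.
Context {dO : measure_display} {Om : measurableType dO}.
Variables (P : probability Om R) (H : nat -> nat) (Z : 'I_N -> nat -> nat -> Om -> TZ).
Hypothesis hZmeas : forall c s h, (1 <= s)%N -> (1 <= h <= H s)%N ->
     measurable_fun setT (Z c s h).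
Hypothesis hZdist : forall c s h, (1 <= s)%N -> (1 <= h <= H s)%N ->
     forall B : set TZ, measurable B ->
     P (Z c s h @^-1` B)%classic = pi c B.
Hypothesis hZind : mutually_independent P
     (fun i : 'I_N * nat * nat => (1 <= i.1.2)%N /\ (1 <= i.2 <= H i.1.2)%N)
     (fun i => Z i.1.1 i.1.2 i.2).
Variables (eta : nat -> R).
Hypothesis heta : forall s, (1 <= s)%N -> 0 < eta s <= eta_inf.
Variable u : 'cV[R]_d.

Lemma hindG s c h (B : set TZ) (E : set Om) : (1 <= s)%N -> (h < H s)%N ->
  measurable B -> Gset H Z s c h E ->
  P (Z c s h.+1 @^-1` B `&` E) = (pi c B * P E)%E.
Proof.
move=> s1 hlt mB [Bs [mBs ->]].
have hh : (h <= H s)%N := ltnW hlt.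
set L := Lidx H s c h.
set i0 := (c, s, h.+1).
have i0L : i0 \notin L by rewrite /L mem_Lidx // /Lpred /= !ltnn !andbF.
have DL : forall i, i \in L -> (1 <= i.1.2)%N /\ (1 <= i.2 <= H i.1.2)%N.
  by move=> i; rewrite /L mem_Lidx //; exact: LpredD.
have Dall : forall i, i \in i0 :: L -> (1 <= i.1.2)%N /\ (1 <= i.2 <= H i.1.2)%N.
  move=> i; rewrite in_cons => /orP[/eqP -> | iL]; last exact: DL.
  by rewrite /i0 /=; split => //; rewrite hlt.
have uq : uniq (i0 :: L) by rewrite /= i0L undup_uniq.
pose B' := fun i => if i == i0 then B else Bs i.
have mB' : forall i, measurable (B' i) by move=> i; rewrite /B'; case: ifP.
have eqL : forall i, i \in L -> B' i = Bs i.
  move=> i iL; rewrite /B'; case: ifP => // /eqP ei.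
  by move: i0L; rewrite -ei iL.
have E1 : Z c s h.+1 @^-1` B `&` [set w | forall i, i \in L -> Bs i (Yi Z i w)]
    = \big[setI/setT]_(i <- i0 :: L) (Yi Z i @^-1` B' i).
  rewrite bigcap_mem; apply/seteqP; split => w /=.
    move=> [Bw HL] i; rewrite in_cons => /orP[/eqP -> | iL].
      by rewrite /B' eqxx.
    by rewrite eqL //; exact: HL.
  move=> H0; split; first by have := H0 i0 (mem_head _ _); rewrite /B' eqxx.
  by move=> i iL; rewrite -eqL //; apply: H0; rewrite in_cons iL orbT.
have E2 : [set w | forall i, i \in L -> Bs i (Yi Z i w)]
    = \big[setI/setT]_(i <- L) (Yi Z i @^-1` Bs i) by rewrite bigcap_mem.
rewrite E1 E2.
have h1 := hZind uq Dall mB'.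
have h2 := hZind (undup_uniq _) DL mBs.
apply: eq_trans; first exact: h1.
rewrite big_cons; congr (_ * _)%E.
  rewrite /B' eqxx; apply: hZdist => //; by rewrite hlt.
apply: esym; apply: eq_trans; first exact: h2.
by apply: eq_big_seq => i iL; rewrite eqL.
Qed.


Lemma b_ge0 s : (1 <= s)%N -> 0 <= 1 - eta s * a.
Proof.
move=> s1; have /andP[e0 ele] := heta s1.
have h : eta s * a <= eta_inf * a by rewrite ler_pM2r.
have h12 : (1 / 2 : R) <= 1 by rewrite ler_pdivrMr // mul1r ler1n.
move: haeta h12 h; lra.
Qed.

Definition Vt t w := lprod t (fun s => Gamma_avg A eta H Z s w) *m u.

Lemma Vt_meas t : mmeas (fun w => Vt t w).
Proof.
apply: mmeas_mul; last exact: mmeas_cst.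
apply: (mmeas_Vt hAmeas) => c s h /andP[s1 _] hh.
exact: hZmeas.
Qed.

Lemma inner t c h : (h <= H t.+1)%N ->
  (Np P p (fun w => enorm (lprod h (fun k => 1%:M - eta t.+1 *: A c (Z c t.+1 k w)) *m Vt t w)%R)
   <= ((1 - eta t.+1 * a) ^+ h)%R%:E * Np P p (fun w => enorm (Vt t w)))%E.
Proof.
elim: h => [|h IH] hh.
  rewrite expr0 mul1e le_eqVlt; apply/orP; left; apply/eqP; congr (Np _ _ _); apply/funext => w /=.
  by rewrite mul1mx.
have hle : (h <= H t.+1)%N := ltnW hh.
have ht1 : (1 <= t.+1)%N by [].
set G := Gset H Z t.+1 c h.
have hW : mmeas (T := g_sigma_algebraType G)
    (fun w => lprod h (fun k => 1%:M - eta t.+1 *: A c (Z c t.+1 k w)) *m Vt t w).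
  apply: mmeas_mul.
    apply: mmeas_lprod => k /andP[k1 kh].
    apply: (mmeas_factor hAmeas).
    have iL : (c, t.+1, k) \in Lidx H t.+1 c h.
      by rewrite mem_Lidx // /Lpred /= !eqxx k1 kh orbT.
    exact: (Yi_measG hle iL).
  apply: mmeas_mul; last exact: mmeas_cst.
  apply: (mmeas_Vt hAmeas) => c' s' h' /andP[s1 st] /andP[h1 hH].
  have iL : (c', s', h') \in Lidx H t.+1 c h.
    by rewrite mem_Lidx // /Lpred /= s1 ltnS st h1 hH.
  exact: (Yi_measG hle iL).
have mX : measurable_fun setT (Z c t.+1 h.+1) by apply: hZmeas => //; rewrite hh.
have Gm : forall E, G E -> measurable E.
  move=> E [Bs [mBs ->]]; apply: meas_Lset => // i.
  rewrite mem_Lidx // => /(LpredD ht1 hle) [i1 i2].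
  exact: hZmeas.
have hind : forall B E, measurable B -> G E ->
    P (Z c t.+1 h.+1 @^-1` B `&` E) = (pi c B * P E)%E.
  by move=> B E mB GE; exact: (hindG ht1 hh mB GE).
have GI : setI_closed G by exact: Gset_setI.
have GT : G setT by exact: Gset_T.
have step := step_bound hAmeas hp ha heta_inf haeta hA1 hM (heta ht1) mX GI GT Gm hind hW.
have eqf : (fun w => enorm (lprod h.+1 (fun k => 1%:M - eta t.+1 *: A c (Z c t.+1 k w)) *m Vt t w))
  = (fun w => enorm ((1%:M - eta t.+1 *: A c (Z c t.+1 h.+1 w)) *m
       (lprod h (fun k => 1%:M - eta t.+1 *: A c (Z c t.+1 k w)) *m Vt t w))).
  by apply/funext => w; rewrite /= mulmxA.
rewrite eqf; apply: le_trans step _.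
rewrite exprS EFinM -muleA; apply: lee_wpmul2l; last exact: IH.
by rewrite lee_fin; exact: b_ge0.
Qed.

Lemma outer t : (Np P p (fun w => enorm (Vt t w)) <=
  ((\prod_(1 <= s < t.+1) (1 - eta s * a) ^+ H s) * enorm u)%R%:E)%E.
Proof.
elim: t => [|t IH].
  rewrite big_geq // mul1r.
  rewrite (_ : (fun w => enorm (Vt 0 w)) = (fun _ => enorm u)).
    by rewrite (Np_cst P hp (enorm_ge0 u)).
  by apply/funext => w; rewrite /Vt /= mul1mx.
have ht1 : (1 <= t.+1)%N by [].
have b0 := b_ge0 ht1.
have K0 : 0 <= \prod_(1 <= s < t.+1) (1 - eta s * a) ^+ H s.
  rewrite big_nat_cond; apply: prodr_ge0 => s /andP[/andP[s1 _] _].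
  by apply: exprn_ge0; exact: b_ge0.
have N0 : 0 <= (N%:R : R)^-1 by rewrite invr_ge0 ler0n.
have mG : forall c, measurable_fun setT
    (fun w => enorm (Gamma_c A eta H Z c t.+1 w *m Vt t w)).
  move=> c; apply: meas_enorm; apply: mmeas_mul; last exact: Vt_meas.
  by apply: (mmeas_Gamma_c hAmeas) => h hh; exact: hZmeas.
have pw : forall w, 0 <= enorm (Vt t.+1 w) <=
    \sum_(c < N) (N%:R : R)^-1 * enorm (Gamma_c A eta H Z c t.+1 w *m Vt t w).
  move=> w; rewrite enorm_ge0 /=.
  rewrite /Vt /= -mulmxA /Gamma_avg -scalemxAl mulmx_suml enormZ ger0_norm //.
  rewrite -mulr_sumr; apply: ler_wpM2l => //; exact: enorm_sum.
have mf : measurable_fun setT (fun w => enorm (Vt t.+1 w)) by exact: meas_enorm (Vt_meas t.+1).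
have mF : forall c, measurable_fun setT
    (fun w => (N%:R : R)^-1 * enorm (Gamma_c A eta H Z c t.+1 w *m Vt t w)).
  by move=> c; apply: measurable_funM; [exact: measurable_cst | exact: mG].
have F0 : forall c w, 0 <= (N%:R : R)^-1 * enorm (Gamma_c A eta H Z c t.+1 w *m Vt t w).
  by move=> c w; rewrite mulr_ge0 // enorm_ge0.
have mg : measurable_fun setT
    (fun w => \sum_(c < N) (N%:R : R)^-1 * enorm (Gamma_c A eta H Z c t.+1 w *m Vt t w)).
  exact: (meas_sum (index_enum 'I_N) mF).
apply: le_trans (Np_le P hp mf mg pw) _.
apply: le_trans (Np_sum P hp (index_enum 'I_N) mF F0) _.
set x := (N%:R : R)^-1 * ((1 - eta t.+1 * a) ^+ H t.+1 *
   ((\prod_(1 <= s < t.+1) (1 - eta s * a) ^+ H s) * enorm u)).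
have term : forall c : 'I_N, (Np P p
    (fun w => (N%:R : R)^-1 * enorm (Gamma_c A eta H Z c t.+1 w *m Vt t w))%R <= x%:E)%E.
  move=> c.
  rewrite (Np_Z P hp N0 (mG c)); last by move=> w; exact: enorm_ge0.
  rewrite /x EFinM; apply: lee_wpmul2l; first by rewrite lee_fin.
  rewrite /Gamma_c; apply: le_trans (inner (t:=t) c (leqnn _)) _.
  rewrite EFinM; apply: lee_wpmul2l; first by rewrite lee_fin exprn_ge0.
  exact: IH.
have hs : (\sum_(c <- index_enum 'I_N) Np P p
    (fun w => (N%:R : R)^-1 * enorm (Gamma_c A eta H Z c t.+1 w *m Vt t w))%R
    <= \sum_(c <- index_enum 'I_N) x%:E)%E.
  by apply: lee_sum => c _; exact: term.
apply: le_trans hs _.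
rewrite sumEFin sumr_const card_ord lee_fin -mulr_natl.
have NN : (N%:R : R) * (N%:R)^-1 = 1 by rewrite mulfV // pnatr_eq0 -lt0n.
have -> : (N%:R : R) * x = ((N%:R : R) * (N%:R)^-1) * ((1 - eta t.+1 * a) ^+ H t.+1 *
   ((\prod_(1 <= s < t.+1) (1 - eta s * a) ^+ H s) * enorm u)) by rewrite /x; ring.
rewrite NN mul1r [in X in _ <= X]big_nat_recr //=.
by rewrite mulrA (mulrC (_ ^+ H t.+1)).
Qed.
End mainsec.


End Helpers.
Import Helpers.
Unset Implicit Arguments. Set Strict Implicit. Set Printing Implicit Defensive.

Theorem lemma6
  (R : realType) (N d : nat) (hN : (0 < N)%N)
  (dZ : measure_display) (TZ : measurableType dZ)
  (pi : 'I_N -> probability TZ R)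
  (A : 'I_N -> TZ -> 'M[R]_d) (b : 'I_N -> TZ -> 'cV[R]_d)
  (hAmeas : forall c i j, measurable_fun setT (fun z => A c z i j))
  (hbmeas : forall c i, measurable_fun setT (fun z => b c z i ord0))
  (theta_star : 'cV[R]_d)
  (h_star : ((N%:R)^-1 *: \sum_(c < N) Abar (pi c) (A c)) *m theta_star
            = (N%:R)^-1 *: \sum_(c < N) bbar (pi c) (b c))
  (theta_c : 'I_N -> 'cV[R]_d)
  (h_c : forall c, Abar (pi c) (A c) *m theta_c c = bbar (pi c) (b c))
  (p : R) (hp : 1 <= p)
  (* Assumption A1(p) *)
  (a eta_inf : R) (ha : 0 < a) (heta_inf : 0 < eta_inf)
  (haeta : eta_inf * a <= 1 / 2)
  (hHurwitz : forall c, hurwitz (- Abar (pi c) (A c)))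
  (hA1 : forall (c : 'I_N) (eta : R), 0 < eta < eta_inf ->
     forall u : 'cV[R]_d,
     (((\int[pi c]_z ((enorm ((1%:M - eta *: A c z) *m u)) `^ p)%:E) `^ (p^-1))
        <= ((1 - eta * a) * enorm u)%:E)%E)
  (* Assumption A2: boundedness *)
  (heps : exists M : R, forall c z,
     enorm ((A c z - Abar (pi c) (A c)) *m theta_c c
            - (b c z - bbar (pi c) (b c))) <= M)
  (hAbnd : exists M : R, forall c z (u : 'cV[R]_d),
     enorm (A c z *m u) <= M * enorm u /\
     enorm ((A c z - Abar (pi c) (A c)) *m u) <= M * enorm u)
  (* Assumption A2: samples *)
  (dO : measure_display) (Omega : measurableType dO) (P : probability Omega R)
  (H : nat -> nat)
  (Z : 'I_N -> nat -> nat -> Omega -> TZ)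
  (hZmeas : forall c s h, (1 <= s)%N -> (1 <= h <= H s)%N ->
     measurable_fun setT (Z c s h))
  (hZdist : forall c s h, (1 <= s)%N -> (1 <= h <= H s)%N ->
     forall B : set TZ, measurable B ->
     P (Z c s h @^-1` B)%classic = pi c B)
  (hZind : mutually_independent P
     (fun i : 'I_N * nat * nat => (1 <= i.1.2)%N /\ (1 <= i.2 <= H i.1.2)%N)
     (fun i => Z i.1.1 i.1.2 i.2))
  (* step sizes *)
  (eta : nat -> R) (heta : forall s, (1 <= s)%N -> 0 < eta s <= eta_inf)
  (theta0 : 'cV[R]_d) (t : nat) (ht : (1 <= t)%N) :
  (((\int[P]_w ((enorm (lprod t (fun s => Gamma_avg A eta H Z s w)
                        *m (theta0 - theta_star))) `^ p)%:E) `^ (p^-1))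
    <= (expR (- a * \sum_(1 <= s < t.+1) eta s * (H s)%:R)
        * enorm (theta0 - theta_star))%:E)%E.
Proof.
case: hAbnd => M hM'.
have hM : forall c z (u : 'cV[R]_d), enorm (A c z *m u) <= M * enorm u.
  by move=> c z u; case: (hM' c z u).
have key := outer hN hAmeas hp ha heta_inf haeta hA1 hM hZmeas hZdist hZind heta
  (theta0 - theta_star) t.
apply: le_trans key _.
rewrite lee_fin; apply: ler_wpM2r; first exact: enorm_ge0.
rewrite mulr_sumr expR_sum big_nat_cond [X in _ <= X]big_nat_cond.
apply: ler_prod => s /andP[/andP[s1 _] _].
have /andP[e0 ele] := heta s s1.
have b0 : 0 <= 1 - eta s * a.
  have h : eta s * a <= eta_inf * a by rewrite ler_pM2r.
  have h12 : (1 / 2 : R) <= 1 by rewrite ler_pdivrMr // mul1r ler1n.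
  move: haeta h12 h; lra.
rewrite exprn_ge0 //=.
rewrite (_ : - a * (eta s * (H s)%:R) = (H s)%:R * (- (eta s * a))); last by ring.
rewrite expRM_natl; apply: lerXn2r; rewrite ?nnegrE ?expR_ge0 //.
by have := expR_ge1Dx (- (eta s * a)); rewrite -[1 - _]/(1 + - _).
Qed.
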